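(* Let $(a_j)_{j=0}^\infty$ be a sequence of complex numbers with $|a_j|=1$ for all $j \ge 0$, and for each $n=0,1,2,\ldots$ let $P_n(z)=\sum_{j=0}^n a_j z^j$. Then $(P_n)_{n=0}^\infty$ is not an ultraflat sequence of unimodular polynomials; that is, there is no sequence $(\varepsilon_n)$ of positive real numbers with $\varepsilon_n\to 0$ such that $$(1-\varepsilon_n)\sqrt{n+1} \le |P_n(e^{it})| \le (1+\varepsilon_n)\sqrt{n+1} \quad \text{for all } t\in\mathbb{R} \text{ and all } n\ge 0.$$
   Context: For $n\ge 0$, $\mathcal{K}_n$ denotes the set of polynomials $Q_n(z)=\sum_{k=0}^n a_k z^k$ with $a_k\in\mathbb{C}$, $|a_k|=1$ (complex unimodular polynomials of degree $n$). Given $\varepsilon>0$, a polynomial $P_n\in\mathcal{K}_n$ is $\varepsilon$-flat if $(1-\varepsilon)\sqrt{n+1}\le |P_n(e^{it})|\le (1+\varepsilon)\sqrt{n+1}$ for all real $t$. A sequence $(P_n)$ with $P_n\in\mathcal{K}_n$ is ultraflat if there is a sequence $(\varepsilon_n)$ of positive numbers converging to $0$ such that each $P_n$ is $\varepsilon_n$-flat. *)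

(* Defs.v *)
From Stdlib Require Import Reals.
From Coquelicot Require Import Coquelicot.
Open Scope R_scope.

Definition expi (t : R) : C := (cos t, sin t).

Definition partial_poly (a : nat -> C) (n : nat) (z : C) : C :=
  sum_n (fun j => Cmult (a j) (Cpow z j)) n.

Definition eps_flat (n : nat) (P : C -> C) (eps : R) : Prop :=
  forall t : R,
    (1 - eps) * sqrt (INR (n + 1)) <= Cmod (P (expi t)) /\
    Cmod (P (expi t)) <= (1 + eps) * sqrt (INR (n + 1)).

Definition ultraflat (P : nat -> C -> C) : Prop :=
  exists eps : nat -> R,
    (forall n, 0 < eps n) /\ is_lim_seq eps 0 /\
    forall n, eps_flat n (P n) (eps n).

(* Main.v *)
Require Import Defs.
From Stdlib Require Import Reals Lra Lia Psatz.
From Coquelicot Require Import Coquelicot.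
Open Scope R_scope.

Fixpoint sC (n : nat) (f : nat -> C) : C :=
  match n with O => RtoC 0 | S k => Cplus (sC k f) (f k) end.
Fixpoint sR (n : nat) (f : nat -> R) : R :=
  match n with O => 0 | S k => sR k f + f k end.

Lemma sC_S n f : sC (S n) f = (sC n f + f n)%C.
Proof. reflexivity. Qed.
Lemma sR_S n f : sR (S n) f = sR n f + f n.
Proof. reflexivity. Qed.
Lemma sC_ext n f g : (forall i, (i < n)%nat -> f i = g i) -> sC n f = sC n g.
Proof. induction n; simpl; intros H; auto. rewrite IHn by (intros; apply H; lia). rewrite H by lia. auto. Qed.
Lemma sR_ext n f g : (forall i, (i < n)%nat -> f i = g i) -> sR n f = sR n g.
Proof. induction n; simpl; intros H; auto. rewrite IHn by (intros; apply H; lia). rewrite H by lia. auto. Qed.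
Lemma sR_le n f g : (forall i, (i < n)%nat -> f i <= g i) -> sR n f <= sR n g.
Proof. induction n; simpl; intros H. lra. assert (H1 := H n ltac:(lia)). assert (sR n f <= sR n g) by (apply IHn; intros; apply H; lia). lra. Qed.
Lemma sR_nonneg n f : (forall i, (i < n)%nat -> 0 <= f i) -> 0 <= sR n f.
Proof. intros H. replace 0 with (sR n (fun _ => 0)). apply sR_le; auto. induction n; simpl; auto. rewrite IHn; try lra. intros; apply H; lia. Qed.
Lemma sC_plus n f g : sC n (fun i => f i + g i)%C = (sC n f + sC n g)%C.
Proof. induction n; simpl. apply injective_projections; simpl; ring. rewrite IHn; ring. Qed.
Lemma sR_plus n f g : sR n (fun i => f i + g i) = sR n f + sR n g.
Proof. induction n; simpl. ring. rewrite IHn; ring. Qed.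
Lemma sC_scal n c f : sC n (fun i => c * f i)%C = (c * sC n f)%C.
Proof. induction n; simpl. apply injective_projections; simpl; ring. rewrite IHn; ring. Qed.
Lemma sR_scal n c f : sR n (fun i => c * f i) = c * sR n f.
Proof. induction n; simpl. ring. rewrite IHn; ring. Qed.
Lemma sR_const n c : sR n (fun _ => c) = INR n * c.
Proof. induction n; simpl sR. simpl; ring. rewrite IHn, S_INR; ring. Qed.
Lemma sC_zero n f : (forall i, (i < n)%nat -> f i = RtoC 0) -> sC n f = RtoC 0.
Proof. induction n; simpl; intros H; auto. rewrite IHn, H by (try intros; try apply H; lia). apply injective_projections; simpl; ring. Qed.
Lemma sC_split a b f : sC (a + b) f = (sC a f + sC b (fun i => f (a + i)%nat))%C.
Proof. induction b; simpl. rewrite Nat.add_0_r. apply injective_projections; simpl; ring.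
  rewrite Nat.add_succ_r; simpl. rewrite IHb. ring. Qed.
Lemma sR_split a b f : sR (a + b) f = sR a f + sR b (fun i => f (a + i)%nat).
Proof. induction b; simpl. rewrite Nat.add_0_r. ring.
  rewrite Nat.add_succ_r; simpl. rewrite IHb. ring. Qed.
Lemma sC_first n f : sC (S n) f = (f O + sC n (fun i => f (S i)))%C.
Proof. change (S n) with (1 + n)%nat. rewrite sC_split. simpl. f_equal. apply injective_projections; simpl; ring. Qed.
Lemma sR_first n f : sR (S n) f = f O + sR n (fun i => f (S i)).
Proof. change (S n) with (1 + n)%nat. rewrite sR_split. simpl. ring. Qed.
Lemma sC_rev n f : sC n f = sC n (fun i => f (n - 1 - i)%nat).
Proof. revert f; induction n; intros f. auto. rewrite sC_first. rewrite (IHn (fun i => f (S i))).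
  simpl sC at 2. replace (n - 0 - n)%nat with O by lia.
  rewrite (sC_ext n (fun i => f (S (n - 1 - i))) (fun i => f (n - 0 - i)%nat)). ring.
  intros; f_equal; lia. Qed.
Lemma sR_rev n f : sR n f = sR n (fun i => f (n - 1 - i)%nat).
Proof. revert f; induction n; intros f. auto. rewrite sR_first. rewrite (IHn (fun i => f (S i))).
  simpl sR at 2. replace (n - 0 - n)%nat with O by lia.
  rewrite (sR_ext n (fun i => f (S (n - 1 - i))) (fun i => f (n - 0 - i)%nat)). ring.
  intros; f_equal; lia. Qed.
Lemma sC_swap n m (f : nat -> nat -> C) : sC n (fun i => sC m (fun j => f i j)) = sC m (fun j => sC n (fun i => f i j)).
Proof. induction n; simpl. symmetry; apply sC_zero; auto. rewrite IHn, <- sC_plus. auto. Qed.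
Lemma sR_swap n m (f : nat -> nat -> R) : sR n (fun i => sR m (fun j => f i j)) = sR m (fun j => sR n (fun i => f i j)).
Proof. induction n; simpl. induction m; simpl; auto. rewrite <- IHm; ring. rewrite IHn, <- sR_plus. auto. Qed.
Lemma sC_mult n m f g : (sC n f * sC m g)%C = sC n (fun i => sC m (fun j => f i * g j))%C.
Proof. rewrite Cmult_comm, <- sC_scal. apply sC_ext; intros. rewrite Cmult_comm, <- sC_scal. apply sC_ext; intros; ring. Qed.
Lemma sC_conj n f : Cconj (sC n f) = sC n (fun i => Cconj (f i)).
Proof. induction n; simpl. apply injective_projections; simpl; ring. rewrite Cplus_conj, IHn; auto. Qed.
Lemma sC_fst n f : fst (sC n f) = sR n (fun i => fst (f i)).
Proof. induction n; simpl; auto. rewrite IHn; auto. Qed.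
Lemma sC_snd n f : snd (sC n f) = sR n (fun i => snd (f i)).
Proof. induction n; simpl; auto. rewrite IHn; auto. Qed.
Lemma sC_delta K l (g : nat -> C) : (l < K)%nat -> sC K (fun l' => if Nat.eqb l l' then g l' else RtoC 0) = g l.
Proof. induction K; intros H. lia. simpl. destruct (Nat.eq_dec l K).
  subst. rewrite Nat.eqb_refl. rewrite sC_zero. apply injective_projections; simpl; ring.
  intros i Hi. destruct (Nat.eqb_spec K i); auto; lia.
  rewrite IHK by lia. destruct (Nat.eqb_spec l K); try lia. apply injective_projections; simpl; ring. Qed.
Lemma sC_tri L (h : nat -> nat -> C) :
  sC L (fun l => sC (S l) (fun i => h i l)) = sC L (fun i => sC (L - i) (fun j => h i (i + j)%nat)).
Proof. induction L. auto.
  change (sC (S L) (fun l => sC (S l) (fun i => h i l))) with (sC L (fun l => sC (S l) (fun i => h i l)) + sC (S L) (fun i => h i L))%C.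
  rewrite IHL. rewrite (sC_S L (fun i => sC (S L - i) (fun j => h i (i + j)%nat))).
  rewrite (sC_ext L (fun i => sC (S L - i) (fun j => h i (i + j)%nat)) (fun i => sC (L - i) (fun j => h i (i + j)%nat) + h i L)%C).
  rewrite sC_plus. replace (S L - L)%nat with 1%nat by lia. rewrite sC_S. simpl sC. rewrite Nat.add_0_r.
  apply injective_projections; simpl; ring.
  intros i Hi. replace (S L - i)%nat with (S (L - i)) by lia. rewrite sC_S. f_equal. f_equal. lia. Qed.
Lemma sC_tail K L f : (K <= L)%nat -> (forall i, (K <= i)%nat -> f i = RtoC 0) -> sC L f = sC K f.
Proof. intros H Hz. replace L with (K + (L - K))%nat by lia. rewrite sC_split, (sC_zero (L-K)).
  apply injective_projections; simpl; ring. intros; apply Hz; lia. Qed.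
Lemma sR_tail K L f : (K <= L)%nat -> (forall i, (K <= i)%nat -> f i = 0) -> sR L f = sR K f.
Proof. intros H Hz. replace L with (K + (L - K))%nat by lia. rewrite sR_split.
  rewrite (sR_ext (L-K) _ (fun _ => 0)), sR_const. ring. intros; apply Hz; lia. Qed.
Lemma sR_CS n f : (sR n f)^2 <= INR n * sR n (fun i => (f i)^2).
Proof. induction n. simpl; lra. rewrite !sR_S, S_INR.
  assert (Hn : 0 <= INR n) by apply pos_INR.
  assert (H0 : 0 <= sR n (fun i => f i ^ 2)) by (apply sR_nonneg; intros; nra).
  destruct n as [|n']. simpl. nra.
  assert (E : INR (S n') > 0) by (apply lt_0_INR; lia).
    set (A := sR (S n') f) in *. set (B := sR (S n') (fun i => f i ^ 2)) in *. set (x := f (S n')).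
    assert (2*A*x <= B + INR (S n') * x^2).
    { assert (INR (S n') * (2*A*x) <= INR (S n') * (B + INR (S n') * x^2)). { assert (0 <= (A - INR (S n') * x)^2) by apply pow2_ge_0. nra. } 
      apply Rmult_le_reg_l with (INR (S n')); lra. }
    nra. Qed.


Definition nrm2 (z : C) : R := fst z * fst z + snd z * snd z.

Lemma nrm2_mult x y : nrm2 (x * y)%C = nrm2 x * nrm2 y.
Proof. unfold nrm2; destruct x, y; simpl; ring. Qed.
Lemma nrm2_conj x : nrm2 (Cconj x) = nrm2 x.
Proof. unfold nrm2; destruct x; simpl; ring. Qed.
Lemma nrm2_fst x : nrm2 x = fst (x * Cconj x)%C.
Proof. unfold nrm2; destruct x; simpl; ring. Qed.
Lemma nrm2_ge0 x : 0 <= nrm2 x.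
Proof. unfold nrm2; nra. Qed.
Lemma nrm2_Cmod x : nrm2 x = (Cmod x)^2.
Proof. unfold Cmod, nrm2. rewrite pow2_sqrt. ring. nra. Qed.
Lemma nrm2_RtoC r : nrm2 (RtoC r) = r * r.
Proof. unfold nrm2; simpl; ring. Qed.
Lemma nrm2_add2 x y : nrm2 (x + y)%C <= 2 * nrm2 x + 2 * nrm2 y.
Proof. unfold nrm2; destruct x as [a b], y as [c d]; simpl. assert (0 <= (a-c)*(a-c)) by apply Rle_0_sqr. assert (0 <= (b-d)*(b-d)) by apply Rle_0_sqr. lra. Qed.
Lemma nrm2_sum_CS n f : nrm2 (sC n f) <= INR n * sR n (fun i => nrm2 (f i)).
Proof. unfold nrm2 at 1. rewrite sC_fst, sC_snd.
  assert (H1 := sR_CS n (fun i => fst (f i))). assert (H2 := sR_CS n (fun i => snd (f i))).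
  unfold nrm2. rewrite (sR_ext n (fun i => fst (f i) * fst (f i) + snd (f i) * snd (f i))
     (fun i => (fst (f i))^2 + (snd (f i))^2)) by (intros; ring).
  rewrite sR_plus. nra. Qed.

Lemma expi_mult a b : (expi a * expi b)%C = expi (a + b).
Proof. unfold expi. apply injective_projections; simpl; [rewrite cos_plus|rewrite sin_plus]; ring. Qed.
Lemma expi_pow t k : Cpow (expi t) k = expi (INR k * t).
Proof. induction k. simpl. unfold expi. rewrite Rmult_0_l, cos_0, sin_0. reflexivity.
  simpl Cpow. rewrite IHk, expi_mult, S_INR. f_equal; ring. Qed.
Lemma expi_conj t : Cconj (expi t) = expi (- t).
Proof. unfold expi, Cconj. simpl. rewrite cos_neg, sin_neg. reflexivity. Qed.
Lemma nrm2_expi t : nrm2 (expi t) = 1.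
Proof. unfold nrm2, expi; simpl. rewrite <- (sin2_cos2 t). unfold Rsqr. ring. Qed.
Lemma expi_int k : expi (2 * INR k * PI) = RtoC 1.
Proof. unfold expi. rewrite <- (Rplus_0_l (2 * INR k * PI)). rewrite cos_period, sin_period, cos_0, sin_0. reflexivity. Qed.

Lemma cos1_zero x : -(2*PI) < x < 2*PI -> cos x = 1 -> x = 0.
Proof. intros H Hc. replace x with (2 * (x/2)) in Hc by field. rewrite cos_2a_sin in Hc.
  assert (Hs : sin (x/2) = 0) by nra.
  destruct (Rtotal_order x 0) as [Hl|[He|Hg]]; auto.
  - assert (0 < sin (- (x/2))) by (apply sin_gt_0; lra). rewrite sin_neg in H0. lra.
  - assert (0 < sin (x/2)) by (apply sin_gt_0; lra). lra. Qed.

Lemma geom q n : ((RtoC 1 - q) * sC n (fun s => Cpow q s))%C = (RtoC 1 - Cpow q n)%C.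
Proof. induction n. simpl. apply injective_projections; simpl; ring.
  rewrite sC_S, Cmult_plus_distr_l, IHn. simpl Cpow. ring. Qed.

Section Samp.
Variable N : nat.
Hypothesis HN : (0 < N)%nat.
Definition zs (s : nat) : C := expi (2 * PI * INR s / INR N).

Lemma orth l l' : (l < N)%nat -> (l' < N)%nat ->
  sC N (fun s => Cpow (zs s) l * Cconj (Cpow (zs s) l'))%C = if Nat.eqb l l' then RtoC (INR N) else RtoC 0.
Proof. intros Hl Hl'. assert (HNr : INR N > 0) by (apply lt_0_INR; lia).
  set (th := 2 * PI * (INR l - INR l') / INR N).
  rewrite (sC_ext N _ (fun s => Cpow (expi th) s)).
  2:{ intros s _. unfold zs. rewrite !expi_pow, expi_conj, expi_mult. f_equal. unfold th. field. lra. }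
  destruct (Nat.eqb_spec l l').
  - subst. unfold th. rewrite Rminus_diag. replace (2 * PI * 0 / INR N) with 0 by (field; lra).
    clear. induction N. reflexivity. rewrite sC_S, IHn. rewrite expi_pow, Rmult_0_r. unfold expi. rewrite cos_0, sin_0.
    rewrite S_INR. apply injective_projections; simpl; ring.
  - assert (Hq : expi th <> RtoC 1).
    { intros E. assert (Hc : cos th = 1) by (apply (f_equal fst) in E; exact E).
      apply cos1_zero in Hc. unfold th in Hc. 
      assert (INR l - INR l' = 0). { assert (PI > 0) by apply PI_RGT_0. 
        apply Rmult_eq_reg_l with (2*PI/INR N). rewrite Rmult_0_r. rewrite <- Hc. field. lra.
        apply Rgt_not_eq. apply Rdiv_lt_0_compat; lra. }
      apply n. apply INR_eq. lra.
      assert (PI > 0) by apply PI_RGT_0. 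
      assert (A1 : INR l < INR N) by (apply lt_INR; lia). assert (A2 : INR l' < INR N) by (apply lt_INR; lia).
      assert (0 <= INR l) by apply pos_INR. assert (0 <= INR l') by apply pos_INR.
      unfold th. split.
      + apply Rmult_lt_reg_r with (INR N); auto. unfold Rdiv. rewrite Rmult_assoc, Rinv_l by lra. nra.
      + apply Rmult_lt_reg_r with (INR N); auto. unfold Rdiv. rewrite Rmult_assoc, Rinv_l by lra. nra. }
    assert (HqN : Cpow (expi th) N = RtoC 1).
    { rewrite expi_pow. replace (INR N * th) with (2 * INR l * PI + - (2 * INR l' * PI)) by (unfold th; field; lra).
      rewrite <- expi_mult, <- expi_conj, !expi_int. apply injective_projections; simpl; ring. }
    assert (G := geom (expi th) N). rewrite HqN in G.
    replace (RtoC 1 - RtoC 1)%C with (RtoC 0) in G by (apply injective_projections; simpl; ring).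
    assert (Hq' : (RtoC 1 - expi th)%C <> RtoC 0).
    { intros E. apply Hq. transitivity (RtoC 1 - (RtoC 1 - expi th))%C. ring. rewrite E. apply injective_projections; simpl; ring. }
    transitivity ((/ (RtoC 1 - expi th) * (RtoC 1 - expi th)) * sC N (fun s => Cpow (expi th) s))%C.
    rewrite Cinv_l by auto. ring. rewrite <- Cmult_assoc, G. ring. Qed.

Lemma parseval K e : (K <= N)%nat ->
  sR N (fun s => nrm2 (sC K (fun l => e l * Cpow (zs s) l)%C)) = INR N * sR K (fun l => nrm2 (e l)).
Proof. intros HK.
  rewrite (sR_ext N _ (fun s => fst (sC K (fun l => sC K (fun l' => e l * Cconj (e l') * (Cpow (zs s) l * Cconj (Cpow (zs s) l')))))%C)).
  2:{ intros s _. rewrite nrm2_fst, sC_conj, sC_mult. f_equal. apply sC_ext; intros. apply sC_ext; intros.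
      rewrite Cmult_conj. ring. }
  rewrite <- sC_fst. rewrite sC_swap.
  rewrite (sC_ext K _ (fun l => e l * Cconj (e l) * RtoC (INR N))%C).
  - rewrite sC_fst. rewrite <- sR_scal. apply sR_ext; intros. rewrite nrm2_fst. destruct (e i), (Cconj (e i)) ; simpl; ring.
  - intros l Hl. rewrite sC_swap.
    rewrite (sC_ext K _ (fun l' => if Nat.eqb l l' then e l * Cconj (e l') * RtoC (INR N) else RtoC 0)%C).
    apply (sC_delta K l (fun l' => e l * Cconj (e l') * RtoC (INR N))%C); auto.
    intros l' Hl'. rewrite sC_scal, orth by lia. destruct (Nat.eqb l l'); auto. apply injective_projections; simpl; ring. Qed.
End Samp.

Definition conv (f g : nat -> C) (l : nat) : C := sC (S l) (fun i => f i * g (l - i)%nat)%C.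

Lemma cauchy_prod K f g z : (forall i, (K <= i)%nat -> f i = RtoC 0) -> (forall i, (K <= i)%nat -> g i = RtoC 0) ->
  (sC K (fun i => f i * Cpow z i) * sC K (fun j => g j * Cpow z j))%C = sC (K + K) (fun l => conv f g l * Cpow z l)%C.
Proof. intros Hf Hg. unfold conv.
  rewrite (sC_ext (K+K) _ (fun l => sC (S l) (fun i => f i * g (l - i)%nat * Cpow z l))%C).
  2:{ intros; rewrite Cmult_comm, <- sC_scal. apply sC_ext; intros; ring. }
  rewrite sC_tri.
  rewrite (sC_ext (K+K) _ (fun i => f i * Cpow z i * sC K (fun j => g j * Cpow z j))%C).
  - rewrite Cmult_comm, <- sC_scal. rewrite (sC_tail K (K+K) (fun i => f i * Cpow z i * sC K (fun j => g j * Cpow z j))%C) by (try lia; intros; rewrite Hf by lia; ring).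
    apply sC_ext; intros; ring.
  - intros i Hi. destruct (Compare_dec.le_lt_dec K i).
    + rewrite Hf by lia. rewrite sC_zero. ring. intros; ring.
    + rewrite <- sC_scal. rewrite (sC_tail K (K+K-i)); [|lia|]. apply sC_ext; intros j _.
      replace (i + j - i)%nat with j by lia. rewrite Cpow_add_r. ring.
      intros j Hj. replace (i + j - i)%nat with j by lia. rewrite Hg by lia. ring. Qed.


Lemma sum_n_sC (f : nat -> C) n : sum_n f n = sC (S n) f.
Proof. induction n. rewrite sum_O. simpl. apply injective_projections; simpl; ring.
  rewrite sum_Sn, IHn. reflexivity. Qed.

Section Main.
Variable a : nat -> C.
Hypothesis ha : forall j, Cmod (a j) = 1.

Lemma a_conj j : (a j * Cconj (a j))%C = RtoC 1.
Proof. rewrite <- Cmod2_conj, ha. apply injective_projections; simpl; ring. Qed.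
Lemma nrm2_a j : nrm2 (a j) = 1.
Proof. rewrite nrm2_Cmod, ha. ring. Qed.

Definition Pm m z := sC (S m) (fun j => a j * Cpow z j)%C.
Definition u m i := if (i <=? m)%nat then a i else RtoC 0.
Definition v m j := if (j <=? m)%nat then Cconj (a (m - j)) else RtoC 0.
Definition x k i := if (k <=? i)%nat then (a i * Cconj (a (i - k)))%C else RtoC 0.
Definition Sx k m := sC (S m) (x k).
Definition w n i := 2 * INR i - INR n.
Definition uF n i := if (i <=? n)%nat then (RtoC (w n i) * a i)%C else RtoC 0.

Lemma u_tail m i : (S m <= i)%nat -> u m i = RtoC 0.
Proof. intros; unfold u; destruct (Nat.leb_spec0 i m); auto; lia. Qed.
Lemma v_tail m i : (S m <= i)%nat -> v m i = RtoC 0.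
Proof. intros; unfold v; destruct (Nat.leb_spec0 i m); auto; lia. Qed.
Lemma uF_tail m i : (S m <= i)%nat -> uF m i = RtoC 0.
Proof. intros; unfold uF; destruct (Nat.leb_spec0 i m); auto; lia. Qed.

Lemma Sx_zero k m : (m < k)%nat -> Sx k m = RtoC 0.
Proof. intros H. unfold Sx. apply sC_zero. intros i Hi. unfold x. destruct (Nat.leb_spec0 k i); auto; lia. Qed.

Lemma Pm_u m z : Pm m z = sC (S m) (fun i => u m i * Cpow z i)%C.
Proof. unfold Pm. apply sC_ext; intros. unfold u. destruct (Nat.leb_spec0 i m); auto; lia. Qed.

Lemma rev_circle m t : sC (S m) (fun j => v m j * Cpow (expi t) j)%C = (Cpow (expi t) m * Cconj (Pm m (expi t)))%C.
Proof. unfold Pm. rewrite sC_conj, <- sC_scal. rewrite sC_rev.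
  apply sC_ext. intros i Hi. unfold v. destruct (Nat.leb_spec0 (S m - 1 - i) m); [|lia].
  replace (m - (S m - 1 - i))%nat with i by lia.
  rewrite Cmult_conj, Cpow_conj, expi_conj, !expi_pow.
  rewrite (Cmult_comm (Cconj (a i))), Cmult_assoc, <- (Cmult_assoc (expi _)), (Cmult_comm (Cconj (a i))), Cmult_assoc. f_equal. rewrite expi_mult. f_equal.
  rewrite minus_INR by lia. rewrite minus_INR by lia. simpl (INR 1). rewrite S_INR. ring. Qed.

Lemma nrm2_rev m t : nrm2 (sC (S m) (fun j => v m j * Cpow (expi t) j)%C) = nrm2 (Pm m (expi t)).
Proof. rewrite rev_circle, nrm2_mult, nrm2_conj, expi_pow, nrm2_expi. ring. Qed.

Lemma coef_mid m : conv (u m) (v m) m = RtoC (INR (S m)).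
Proof. unfold conv. rewrite (sC_ext (S m) _ (fun _ => RtoC 1)).
  - clear. induction (S m). reflexivity. rewrite sC_S, IHn, S_INR. apply injective_projections; simpl; ring.
  - intros i Hi. unfold u, v. destruct (Nat.leb_spec0 i m); [|lia]. destruct (Nat.leb_spec0 (m - i) m); [|lia].
    replace (m - (m - i))%nat with i by lia. apply a_conj. Qed.

Lemma coef_gen m k (c : nat -> C) : (forall i, (S m <= i)%nat -> c i = RtoC 0) ->
  sC (S (m + S k)) (fun i => c i * v m (m + S k - i))%C = sC (S m) (fun i => c i * (if (S k <=? i)%nat then Cconj (a (i - S k)) else RtoC 0))%C.
Proof. intros Hc. rewrite (sC_tail (S m) (S (m + S k))); [| lia |].
  - apply sC_ext; intros i Hi. unfold v. f_equal. destruct (Nat.leb_spec0 (m + S k - i) m); destruct (Nat.leb_spec0 (S k) i); try lia; auto.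
    f_equal. f_equal. lia.
  - intros i Hi. rewrite Hc by lia. ring. Qed.

Lemma coef_up m k : conv (u m) (v m) (m + S k) = Sx (S k) m.
Proof. unfold conv. rewrite coef_gen by apply u_tail. unfold Sx. apply sC_ext; intros i Hi.
  unfold u, x. destruct (Nat.leb_spec0 i m); [|lia]. destruct (Nat.leb_spec0 (S k) i); ring. Qed.

Lemma coefF_up n k : conv (uF n) (v n) (n + S k) = sC (S n) (fun i => RtoC (w n i) * x (S k) i)%C.
Proof. unfold conv. rewrite coef_gen by apply uF_tail. apply sC_ext; intros i Hi.
  unfold uF, x. destruct (Nat.leb_spec0 i n); [|lia]. destruct (Nat.leb_spec0 (S k) i); ring. Qed.

Lemma sumI K : sR K (fun i => INR i) = INR K * (INR K - 1) / 2.
Proof. induction K. simpl; field. rewrite sR_S, IHK, S_INR. field. Qed.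
Lemma sumI2 K : sR K (fun i => INR i * INR i) = INR K * (INR K - 1) * (2 * INR K - 1) / 6.
Proof. induction K. simpl; field. rewrite sR_S, IHK, S_INR. field. Qed.

Lemma sR_w n : sR (S n) (fun i => w n i) = 0.
Proof. unfold w. rewrite (sR_ext _ _ (fun i => 2 * INR i + (- INR n))) by (intros; ring).
  rewrite sR_plus, sR_scal, sR_const, sumI, S_INR. field. Qed.
Lemma sR_w2 n : sR (S n) (fun i => w n i * w n i) = INR n * (INR n + 1) * (INR n + 2) / 3.
Proof. unfold w. rewrite (sR_ext _ _ (fun i => 4 * (INR i * INR i) + ((-4 * INR n) * INR i + INR n * INR n))) by (intros; ring).
  rewrite !sR_plus, !sR_scal, sR_const, sumI, sumI2, S_INR. field. Qed.

Lemma coefF_mid n : conv (uF n) (v n) n = RtoC 0.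
Proof. unfold conv. rewrite (sC_ext (S n) _ (fun i => RtoC (w n i))).
  - apply injective_projections. rewrite sC_fst. change (fst (RtoC 0)) with 0. rewrite <- (sR_w n). apply sR_ext; auto.
    rewrite sC_snd. change (snd (RtoC 0)) with 0. rewrite (sR_ext _ _ (fun _ => 0)) by auto. rewrite sR_const; ring.
  - intros i Hi. unfold uF, v. destruct (Nat.leb_spec0 i n); [|lia]. destruct (Nat.leb_spec0 (n - i) n); [|lia].
    replace (n - (n - i))%nat with i by lia. rewrite <- Cmult_assoc, a_conj. apply injective_projections; simpl; ring. Qed.

Lemma coefF_low n k : (k < n)%nat -> conv (uF n) (v n) (n - S k) =
  Cconj (sC (S n) (fun j => RtoC (w n j - 2 * INR (S k)) * x (S k) j))%C.
Proof. intros Hk. unfold conv. rewrite sC_conj.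
  assert (Hs : forall f, sC (S n) f = (sC (S k) f + sC (S (n - S k)) (fun i => f (S k + i)%nat))%C).
  { intros f. rewrite <- sC_split. f_equal. lia. }
  rewrite Hs.
  rewrite (sC_zero (S k)). 2:{ intros i Hi. unfold x. destruct (Nat.leb_spec0 (S k) i); try lia.
     apply injective_projections; simpl; ring. }
  rewrite Cplus_0_l. apply sC_ext; intros i Hi. unfold uF, v, x.
  destruct (Nat.leb_spec0 i n); [|lia]. destruct (Nat.leb_spec0 (n - S k - i) n); [|lia].
  destruct (Nat.leb_spec0 (S k) (S k + i)); [|lia].
  replace (n - (n - S k - i))%nat with (S k + i)%nat by lia. replace (S k + i - S k)%nat with i by lia.
  rewrite !Cmult_conj, Cconj_conj. 
  replace (w n (S k + i) - 2 * INR (S k)) with (w n i) by (unfold w; rewrite plus_INR; ring).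
  replace (Cconj (RtoC (w n i))) with (RtoC (w n i)) by (apply injective_projections; simpl; ring).
  ring. Qed.

Lemma abel (al be : R) (y : nat -> C) n :
  sC (S n) (fun i => RtoC (al + be * INR i) * y i)%C =
  (RtoC (al + be * INR n) * sC (S n) y - RtoC be * sC n (fun m => sC (S m) y))%C.
Proof. induction n.
  - simpl. apply injective_projections; simpl; ring.
  - rewrite sC_S, IHn. rewrite (sC_S n (fun m => sC (S m) y)). rewrite (sC_S (S n) y). rewrite S_INR.
    rewrite (sC_S n y). apply injective_projections; simpl; ring. Qed.

Lemma bound_lin (c : R) n X (Y : nat -> C) : c * c <= INR n * INR n ->
  nrm2 (RtoC c * X - RtoC 2 * sC n Y)%C <= 2 * (INR n * INR n) * nrm2 X + 8 * INR n * sR n (fun m => nrm2 (Y m)).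
Proof. intros Hc. eapply Rle_trans. 
  replace (RtoC c * X - RtoC 2 * sC n Y)%C with (RtoC c * X + RtoC (-2) * sC n Y)%C by (apply injective_projections; simpl; ring).
  apply nrm2_add2. rewrite !nrm2_mult, !nrm2_RtoC.
  assert (H1 := nrm2_sum_CS n Y). assert (0 <= nrm2 X) by apply nrm2_ge0.
  assert (0 <= nrm2 (sC n Y)) by apply nrm2_ge0. nra. Qed.

End Main.


Section D.
Variable a : nat -> C.
Hypothesis ha : forall j, Cmod (a j) = 1.

Lemma prod_eq m t : sC (S m + S m) (fun l => conv (u a m) (v a m) l * Cpow (expi t) l)%C = (Pm a m (expi t) * sC (S m) (fun j => v a m j * Cpow (expi t) j))%C.
Proof. rewrite <- cauchy_prod. rewrite Pm_u. reflexivity. apply u_tail. apply v_tail. Qed.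

Lemma nrm2_P_up m e t : 0 <= 1 + e -> Cmod (Pm a m (expi t)) <= (1+e) * sqrt (INR (m+1)) ->
  nrm2 (Pm a m (expi t)) <= (1+e)^2 * INR (S m).
Proof. intros He H. rewrite nrm2_Cmod. assert (0 <= Cmod (Pm a m (expi t))) by apply Cmod_ge_0.
  replace (INR (S m)) with ((sqrt (INR (m+1)))^2). 
  2:{ rewrite pow2_sqrt. f_equal; lia. apply pos_INR. }
  rewrite <- Rpow_mult_distr. apply pow_incr. lra. Qed.

Lemma nrm2_P_low m e t : 0 <= 1 - e -> (1-e) * sqrt (INR (m+1)) <= Cmod (Pm a m (expi t)) ->
  (1-e)^2 * INR (S m) <= nrm2 (Pm a m (expi t)).
Proof. intros He H. rewrite nrm2_Cmod.
  replace (INR (S m)) with ((sqrt (INR (m+1)))^2). 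
  2:{ rewrite pow2_sqrt. f_equal; lia. apply pos_INR. }
  rewrite <- Rpow_mult_distr. apply pow_incr. split; auto. apply Rmult_le_pos; auto. apply sqrt_pos. Qed.

Lemma sigma_bound m e : 0 <= 1 + e -> (forall t, Cmod (Pm a m (expi t)) <= (1+e) * sqrt (INR (m+1))) ->
  INR (S m) * INR (S m) + sR m (fun k => nrm2 (Sx a (S k) m)) <= ((1+e)^2 * INR (S m)) * ((1+e)^2 * INR (S m)).
Proof. intros He H. set (N := (S m + S m)%nat). assert (HN : (0 < N)%nat) by (unfold N; lia).
  assert (HNr : 0 < INR N) by (apply lt_0_INR; lia).
  set (B := (1+e)^2 * INR (S m)).
  assert (Hpt : forall s, nrm2 (sC N (fun l => conv (u a m) (v a m) l * Cpow (zs N s) l)%C) <= B * B).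
  { intros s. unfold zs, N. rewrite prod_eq, nrm2_mult, nrm2_rev.
    assert (h := nrm2_P_up m e (2 * PI * INR s / INR (S m + S m)) He (H _)).
    assert (0 <= nrm2 (Pm a m (expi (2 * PI * INR s / INR (S m + S m))))) by apply nrm2_ge0. unfold B. nra. }
  assert (Hsum : sR N (fun s => nrm2 (sC N (fun l => conv (u a m) (v a m) l * Cpow (zs N s) l)%C)) <= INR N * (B * B)).
  { rewrite <- sR_const. apply sR_le; intros; auto. }
  rewrite parseval in Hsum by (auto; lia).
  assert (Hc : sR N (fun l => nrm2 (conv (u a m) (v a m) l)) <= B * B).
  { apply Rmult_le_reg_l with (INR N); auto. }
  eapply Rle_trans; [|exact Hc].
  assert (Hs : forall f, sR N f = sR m f + (f m + sR (S m) (fun i => f (m + S i)%nat))).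
  { intros f. unfold N. replace (S m + S m)%nat with (m + S (S m))%nat by lia. rewrite sR_split, sR_first.
    rewrite Nat.add_0_r. reflexivity. }
  rewrite Hs. rewrite coef_mid by auto. rewrite nrm2_RtoC.
  assert (0 <= sR m (fun l => nrm2 (conv (u a m) (v a m) l))) by (apply sR_nonneg; intros; apply nrm2_ge0).
  rewrite sR_S. rewrite (sR_ext m (fun i => nrm2 (conv (u a m) (v a m) (m + S i))) (fun k => nrm2 (Sx a (S k) m))) by (intros; rewrite coef_up; auto).
  assert (0 <= nrm2 (conv (u a m) (v a m) (m + S m))) by apply nrm2_ge0. lra. Qed.
End D.


Section E.
Variable a : nat -> C.
Hypothesis ha : forall j, Cmod (a j) = 1.

Definition Fp n z := sC (S n) (fun i => uF a n i * Cpow z i)%C.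

Lemma F_lower n e : 0 <= 1 - e -> (forall t, (1-e) * sqrt (INR (n+1)) <= Cmod (Pm a n (expi t))) ->
  (1-e)^2 * INR (S n) * (INR n * (INR n + 1) * (INR n + 2) / 3) <= sR (S n + S n) (fun l => nrm2 (conv (uF a n) (v a n) l)).
Proof. intros He H. set (N := (S n + S n)%nat). assert (HN : (0 < N)%nat) by (unfold N; lia).
  assert (HNr : 0 < INR N) by (apply lt_0_INR; lia).
  set (B := (1-e)^2 * INR (S n)).
  assert (HB : 0 <= B) by (unfold B; apply Rmult_le_pos; [apply pow2_ge_0 | apply pos_INR]).
  assert (Hpt : forall s, B * nrm2 (Fp n (zs N s)) <= nrm2 (sC N (fun l => conv (uF a n) (v a n) l * Cpow (zs N s) l)%C)).
  { intros s. unfold zs, N. rewrite <- cauchy_prod by (try apply uF_tail; apply v_tail).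
    rewrite nrm2_mult, nrm2_rev. unfold Fp.
    assert (h := nrm2_P_low a n e (2 * PI * INR s / INR (S n + S n)) He (H _)).
    assert (0 <= nrm2 (sC (S n) (fun i => uF a n i * Cpow (expi (2 * PI * INR s / INR (S n + S n))) i)%C)) by apply nrm2_ge0.
    unfold B. nra. }
  assert (Hsum : sR N (fun s => B * nrm2 (Fp n (zs N s))) <= sR N (fun s => nrm2 (sC N (fun l => conv (uF a n) (v a n) l * Cpow (zs N s) l)%C))).
  { apply sR_le; intros; auto. }
  rewrite parseval in Hsum by (auto; lia). rewrite sR_scal in Hsum. unfold Fp in Hsum.
  rewrite parseval in Hsum by (auto; unfold N; lia).
  rewrite (sR_ext (S n) _ (fun i => w n i * w n i)) in Hsum.
  2:{ intros i Hi. unfold uF. destruct (Nat.leb_spec0 i n); [|lia]. rewrite nrm2_mult, nrm2_RtoC, nrm2_a by auto. ring. }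
  rewrite sR_w2 in Hsum. apply Rmult_le_reg_l with (INR N); auto. fold B. nra. Qed.

Definition G n k := 2 * (INR n * INR n) * nrm2 (Sx a (S k) n) + 8 * INR n * sR n (fun m => nrm2 (Sx a (S k) m)).

Lemma G_n n : G n n = 0.
Proof. unfold G. rewrite Sx_zero by lia. rewrite (sR_ext n _ (fun _ => 0)). rewrite sR_const, nrm2_RtoC. ring.
  intros i Hi. rewrite Sx_zero by lia. rewrite nrm2_RtoC; ring. Qed.

Lemma F_upper n : sR (S n + S n) (fun l => nrm2 (conv (uF a n) (v a n) l)) <= 2 * sR n (G n).
Proof.
  assert (Hs : forall f, sR (S n + S n) f = sR n f + (f n + sR (S n) (fun i => f (n + S i)%nat))).
  { intros f. replace (S n + S n)%nat with (n + S (S n))%nat by lia. rewrite sR_split, sR_first.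
    rewrite Nat.add_0_r. reflexivity. }
  rewrite Hs. rewrite coefF_mid by auto. rewrite nrm2_RtoC.
  assert (H1 : sR n (fun l => nrm2 (conv (uF a n) (v a n) l)) <= sR n (G n)).
  { rewrite sR_rev. apply sR_le. intros k Hk. replace (n - 1 - k)%nat with (n - S k)%nat by lia.
    rewrite coefF_low by auto. rewrite nrm2_conj.
    rewrite (sC_ext (S n) _ (fun j => RtoC ((- INR n - 2 * INR (S k)) + 2 * INR j) * x a (S k) j)%C)
      by (intros; unfold w; f_equal; f_equal; ring).
    rewrite abel. unfold G. apply bound_lin. rewrite S_INR.
    assert (INR k + 1 <= INR n) by (rewrite <- S_INR; apply le_INR; lia). assert (0 <= INR k) by apply pos_INR. nra. }
  assert (H2 : sR (S n) (fun i => nrm2 (conv (uF a n) (v a n) (n + S i))) <= sR (S n) (G n)).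
  { apply sR_le. intros k Hk. rewrite coefF_up.
    rewrite (sC_ext (S n) _ (fun j => RtoC ((- INR n) + 2 * INR j) * x a (S k) j)%C)
      by (intros; unfold w; f_equal; f_equal; ring).
    rewrite abel. unfold G. apply bound_lin. nra. }
  rewrite (sR_S n (G n)), G_n in H2. lra. Qed.

Lemma G_sum n : sR n (G n) = 2 * (INR n * INR n) * sR n (fun k => nrm2 (Sx a (S k) n)) +
   8 * INR n * sR n (fun m => sR m (fun k => nrm2 (Sx a (S k) m))).
Proof. unfold G. rewrite sR_plus, !sR_scal. f_equal. f_equal. rewrite sR_swap. apply sR_ext. intros m Hm.
  apply sR_tail. lia. intros k Hk. rewrite Sx_zero by lia. rewrite nrm2_RtoC; ring. Qed.
End E.


Section Fin.
Variable a : nat -> C.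
Hypothesis ha : forall j, Cmod (a j) = 1.
Variable e : nat -> R.
Hypothesis epos : forall m, 0 < e m.
Hypothesis flat : forall m t, (1 - e m) * sqrt (INR (m+1)) <= Cmod (Pm a m (expi t)) /\ Cmod (Pm a m (expi t)) <= (1 + e m) * sqrt (INR (m+1)).

Definition Dm m := ((1 + e m)^2 * INR (S m)) * ((1 + e m)^2 * INR (S m)) - INR (S m) * INR (S m).

Lemma sig_le m : sR m (fun k => nrm2 (Sx a (S k) m)) <= Dm m.
Proof. unfold Dm. assert (h := sigma_bound a ha m (e m) ltac:(specialize (epos m); lra) (fun t => proj2 (flat m t))). lra. Qed.

Lemma key n : e n <= 1 ->
  (1 - e n)^2 * INR (S n) * (INR n * (INR n + 1) * (INR n + 2) / 3) <=
  4 * (INR n * INR n) * Dm n + 16 * INR n * sR n Dm.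
Proof. intros Hle.
  assert (h1 := F_lower a ha n (e n) ltac:(lra) (fun t => proj1 (flat n t))).
  assert (h2 := F_upper a ha n). rewrite G_sum in h2 by auto.
  assert (h3 := sig_le n).
  assert (h4 : sR n (fun m => sR m (fun k => nrm2 (Sx a (S k) m))) <= sR n Dm) by (apply sR_le; intros; apply sig_le).
  assert (0 <= INR n * INR n) by nra. assert (0 <= INR n) by apply pos_INR. nra. Qed.
End Fin.

Theorem theorem2p1 (a : nat -> C) (ha : forall j, Cmod (a j) = 1) :
  ~ ultraflat (fun n => partial_poly a n).
Proof.
  intros [e [epos [elim eflat]]].
  assert (flat : forall m t, (1 - e m) * sqrt (INR (m+1)) <= Cmod (Pm a m (expi t)) /\ Cmod (Pm a m (expi t)) <= (1 + e m) * sqrt (INR (m+1))).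
  { intros m t. destruct (eflat m t) as [h1 h2]. unfold partial_poly in *. rewrite sum_n_sC in h1, h2. split; auto. }
  apply is_lim_seq_spec in elim. destruct (elim (mkposreal (1/1000) ltac:(lra))) as [M HM]. simpl in HM.
  assert (HeM : forall m, (M <= m)%nat -> e m <= 1/1000).
  { intros m Hm. specialize (HM m Hm). rewrite Rminus_0_r in HM. apply Rabs_def2 in HM. lra. }
  assert (HD : forall m, (M <= m)%nat -> Dm e m <= (1/200) * (INR (S m) * INR (S m))).
  { intros m Hm. unfold Dm. assert (h := HeM m Hm). assert (h0 := epos m).
    assert (0 <= INR (S m) * INR (S m)) by (apply Rmult_le_pos; apply pos_INR).
    assert ((1 + e m)^2 * (1 + e m)^2 <= 1 + 1/200) by (simpl; nra). nra. }
  assert (HD0 : forall m, 0 <= Dm e m).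
  { intros m. unfold Dm. assert (h0 := epos m).
    assert (0 <= INR (S m) * INR (S m)) by (apply Rmult_le_pos; apply pos_INR).
    assert (1 <= (1 + e m)^2 * (1 + e m)^2) by (simpl; nra). nra. }
  set (C0 := sR M (Dm e)).
  destruct (INR_unbounded (100 * C0)) as [K HK].
  set (n := (M + K + 1)%nat).
  assert (Hn1 : INR n >= INR K + 1). { unfold n. rewrite !plus_INR. simpl (INR 1). assert (0 <= INR M) by apply pos_INR. lra. }
  assert (HMn : (M <= n)%nat) by (unfold n; lia).
  assert (Hk := key a ha e epos flat n ltac:(specialize (HeM n HMn); lra)).
  assert (Hsum : sR n (Dm e) <= C0 + (1/200) * INR n * (INR (S n) * INR (S n))).
  { replace n with (M + (n - M))%nat at 1 by lia. rewrite sR_split. unfold C0.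
    assert (sR (n - M) (fun i => Dm e (M + i)%nat) <= sR (n - M) (fun _ => (1/200) * (INR (S n) * INR (S n)))).
    { apply sR_le. intros i Hi. eapply Rle_trans. apply HD. lia.
      assert (INR (S (M + i)) <= INR (S n)) by (apply le_INR; lia). assert (0 <= INR (S (M+i))) by apply pos_INR. nra. }
    rewrite sR_const in H. assert (INR (n - M) <= INR n) by (apply le_INR; lia).
    assert (0 <= INR (S n) * INR (S n)) by (apply Rmult_le_pos; apply pos_INR). nra. }
  assert (HDn := HD n HMn). assert (Hen := HeM n HMn). assert (h0 := epos n).
  rewrite S_INR in *. set (r := INR n) in *.
  assert (HC0 : 0 <= C0) by (apply sR_nonneg; intros; auto).
  assert (Hr : r >= 1) by (assert (0 <= INR K) by apply pos_INR; lra).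
  assert (H999 : (1 - e n)^2 >= 998/1000) by (simpl; nra).
  (* r(r+1)^2 (r+2) * 0.998/3 <= 4 r^2 (1/200)(r+1)^2 + 16 r (C0 + (1/200) r (r+1)^2) *)
  assert (HQ : 0 <= (r+1) * (r * (r+1) * (r+2) / 3)).
  { assert (0 <= r * (r+1)) by nra. assert (0 <= r * (r+1) * (r+2)) by nra. assert (0 <= r * (r+1) * (r+2) / 3) by lra. nra. }
  assert (A1 : (1 - e n)^2 * (r+1) * (r * (r+1) * (r+2) / 3) >= (998/1000) * ((r+1) * (r * (r+1) * (r+2) / 3))).
  { rewrite Rmult_assoc. apply Rmult_ge_compat_r; lra. }
  assert (A2 : 4 * (r*r) * Dm e n <= 4 * (r*r) * ((1/200) * ((r+1)*(r+1)))) by (apply Rmult_le_compat_l; nra).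
  assert (A3 : 16 * r * sR n (Dm e) <= 16 * r * (C0 + (1/200) * r * ((r+1)*(r+1)))) by (apply Rmult_le_compat_l; nra).
  assert (A4 : 100 * C0 < r) by lra.
  assert (A5 : 16 * r * C0 < 16/100 * r * r) by nra.
  assert (A6 : 0 < r * (r+1) * (r+1)) by nra.
  nra.
Qed.
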